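(* Let $\mathbf{c}=\mathbf{a}+\mathbf{b}$. For every homogeneous polynomial $w\in\mathbb{Z}\langle \mathbf{a},\mathbf{b}\rangle$ of degree $n$ the following identities hold in $\mathbb{Z}[q]$: \begin{align*} \Theta(w\cdot \mathbf{c}) &= (1+q^{n+1})\cdot\Theta(w),\\ \Theta(G(w)) &= q\cdot [n]\cdot \Theta(w),\\ \Theta(\mathrm{Pyr}(w)) &= [n+2]\cdot\Theta(w),\\ \Theta(\mathrm{Bipyr}(w)) &= [2]\cdot[n+1]\cdot\Theta(w). \end{align*}
   Context: $\mathbb{Z}\langle \mathbf{a},\mathbf{b}\rangle$ is the ring of polynomials in the non-commuting variables $\mathbf{a},\mathbf{b}$. The Major MacMahon map $\Theta:\mathbb{Z}\langle \mathbf{a},\mathbf{b}\rangle\to\mathbb{Z}[q]$ is the $\mathbb{Z}$-linear map defined on monomials $w=u_1u_2\cdots u_n$ (each $u_i\in\{\mathbf{a},\mathbf{b}\}$) by $\Theta(w)=\prod_{i:\,u_i=\mathbf{b}} q^{i}$ (so $\Theta(1)=1$). For $m\ge 0$, $[m]=1+q+\cdots+q^{m-1}$ (so $[0]=0$). $G$ and $D$ are the derivations of $\mathbb{Z}\langle \mathbf{a},\mathbf{b}\rangle$ (linear maps satisfying $X(uv)=X(u)v+uX(v)$) determined by $G(\mathbf{a})=\mathbf{b}\mathbf{a}$, $G(\mathbf{b})=\mathbf{a}\mathbf{b}$, $D(\mathbf{a})=D(\mathbf{b})=\mathbf{a}\mathbf{b}+\mathbf{b}\mathbf{a}$, and $G(1)=D(1)=0$.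 The pyramid and bipyramid operators are the linear maps $\mathrm{Pyr}(w)=G(w)+w\cdot\mathbf{c}$ and $\mathrm{Bipyr}(w)=D(w)+\mathbf{c}\cdot w$. *)

(* Defs.v *)
From HB Require Import structures.
From mathcomp Require Import all_boot all_order all_algebra.
From mathcomp Require Import finmap monalg.
Set Implicit Arguments. Unset Strict Implicit. Unset Printing Implicit Defensive.
Import GRing.Theory.
Local Open Scope ring_scope.

(* Letters: a is encoded as [false], b as [true].
   ZAB = Z<a,b> is the monoid algebra {malg int[{fmonom bool}]}
   (non-commutative polynomials in a, b with integer coefficients). *)
Definition ZAB := {malg int[{fmonom bool}]}.

Definition mon (s : seq bool) : ZAB := << FMonom s >>.

Definition va : ZAB := mon [:: false].
Definition vb : ZAB := mon [:: true].
Definition vc : ZAB := va + vb.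

Definition theta_word (m : {fmonom bool}) : {poly int} :=
  \prod_(i < size m | nth false m i) 'X^(i.+1).

Definition Theta (w : ZAB) : {poly int} :=
  \sum_(k <- msupp w) (w@_k)%:P * theta_word k.

Definition qint (m : nat) : {poly int} := \sum_(i < m) 'X^i.

(* The derivation X with X(letter x) = f x, on a word u_1...u_n:
   X(u_1...u_n) = sum_i u_1...u_(i-1) X(u_i) u_(i+1)...u_n  (Leibniz rule),
   extended Z-linearly; this is the unique derivation with these values. *)
Definition der_word (f : bool -> ZAB) (m : {fmonom bool}) : ZAB :=
  \sum_(i < size m) mon (take i m) * f (nth false m i) * mon (drop i.+1 m).

Definition der (f : bool -> ZAB) (w : ZAB) : ZAB :=
  \sum_(k <- msupp w) w@_k *: der_word f k.

Definition Gder : ZAB -> ZAB := der (fun x => if x then va * vb else vb * va).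
Definition Dder : ZAB -> ZAB := der (fun _ => va * vb + vb * va).

Definition Pyr (w : ZAB) : ZAB := Gder w + w * vc.
Definition Bipyr (w : ZAB) : ZAB := Dder w + vc * w.

Definition homogeneous (n : nat) (w : ZAB) : Prop :=
  forall k : {fmonom bool}, k \in msupp w -> size k = n.

(* Main.v *)
Require Import Defs.
From HB Require Import structures.
From mathcomp Require Import all_boot all_order all_algebra.
From mathcomp Require Import finmap monalg.
From mathcomp Require Import ring.
Local Open Scope ring_scope.
Import GRing.Theory.

Definition tw (s : seq bool) := theta_word (FMonom s).
Definition fac n (x : bool) : {poly int} := if x then 'X^(n.+1) else 1.

Lemma ThetaM w : Theta w = mmap (@polyC int) theta_word w.
Proof. by []. Qed.

Lemma ThetaD u v : Theta (u + v) = Theta u + Theta v.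
Proof. by rewrite !ThetaM mmapD. Qed.

Lemma Theta0 : Theta 0 = 0.
Proof. by rewrite ThetaM mmap0. Qed.

Lemma Theta_sum (I : Type) (r : seq I) (P : pred I) (F : I -> ZAB) :
  Theta (\sum_(i <- r | P i) F i) = \sum_(i <- r | P i) Theta (F i).
Proof. exact: (big_morph _ ThetaD Theta0). Qed.

Lemma ThetaU c k : Theta << c *g k >> = c%:P * theta_word k.
Proof. by rewrite ThetaM mmapU. Qed.

Lemma ThetaZ c v : Theta (c *: v) = c%:P * Theta v.
Proof.
rewrite [LHS]ThetaM (mmapEw (msuppZ_le c v)) /Theta big_distrr /=.
by apply: eq_bigr => k _; rewrite mcoeffZ polyCM mulrA.
Qed.

Lemma monM (k1 k2 : {fmonom bool}) : mmul k1 k2 = FMonom (k1 ++ k2).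
Proof. by apply: val_inj; rewrite /= fmM. Qed.

Lemma one_fm : (@mone (fmonom bool)) = FMonom [::].
Proof. by apply: val_inj; rewrite /= fm1. Qed.

Lemma mon_nil : mon [::] = 1.
Proof.
apply/malgP => k; rewrite mcoeff1 /mon mcoeffU1 one_fm eq_sym //.
Qed.

Lemma mon_cat s t : mon s * mon t = mon (s ++ t).
Proof. by rewrite /mon malgM_def fgmulUU mulr1 monM. Qed.

Lemma UM c k t : << c *g k >> * mon t = << c *g FMonom (k ++ t) >>.
Proof. by rewrite /mon malgM_def fgmulUU mulr1 monM. Qed.

Lemma MU c k t : mon t * << c *g k >> = << c *g FMonom (t ++ k) >>.
Proof. by rewrite /mon malgM_def fgmulUU mul1r monM. Qed.

Lemma Theta_mon s : Theta (mon s) = tw s.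
Proof. by rewrite /mon ThetaU mul1r. Qed.

Lemma tw_rcons s x : tw (rcons s x) = tw s * fac (size s) x.
Proof.
rewrite /tw /theta_word /= size_rcons big_mkcond big_ord_recr /= nth_rcons ltnn eqxx.
rewrite [in RHS]big_mkcond /=; congr (_ * _).
by apply: eq_bigr => i _; rewrite nth_rcons ltn_ord.
Qed.

Lemma ThetaE w : Theta w = \sum_(k <- msupp w) (w@_k)%:P * theta_word k.
Proof. by []. Qed.

Lemma hom0 n : homogeneous n 0.
Proof. by move=> k; rewrite msupp0 inE. Qed.

Lemma homD n u v : homogeneous n u -> homogeneous n v -> homogeneous n (u + v).
Proof.
move=> hu hv k /(fsubsetP (msuppD_le u v)); rewrite inE => /orP[/hu|/hv] //.
Qed.

Lemma hom_sum n (I : Type) (r : seq I) (P : pred I) (F : I -> ZAB) :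
  (forall i, P i -> homogeneous n (F i)) -> homogeneous n (\sum_(i <- r | P i) F i).
Proof. by move=> H; apply: big_ind => //; [apply: hom0| apply: homD]. Qed.

Lemma homU (c : int) (k : {fmonom bool}) : homogeneous (size k) << c *g k >>.
Proof. by move=> k' /(fsubsetP msuppU_le); rewrite inE => /eqP ->. Qed.

Lemma hom_mon s : homogeneous (size s) (mon s).
Proof. exact: homU. Qed.

Lemma hom_eq n m w : homogeneous n w -> n = m -> homogeneous m w.
Proof. by move=> h <-. Qed.
Arguments hom_eq {n m w}.

Lemma homM n m u v : homogeneous n u -> homogeneous m v -> homogeneous (n + m) (u * v).
Proof.
move=> hu hv; rewrite malgME big_seq; apply: hom_sum => k1 k1u.
rewrite big_seq; apply: hom_sum => k2 k2v.
apply: hom_eq (homU _ _) _; by rewrite monM /= size_cat (hu _ k1u) (hv _ k2v).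
Qed.

Arguments homM {n m u v}.

Lemma Theta_app n w x : homogeneous n w ->
  Theta (w * mon [:: x]) = Theta w * fac n x.
Proof.
move=> hw; rewrite {1}(monalgE w) mulr_suml Theta_sum [Theta w]ThetaE big_distrl /=.
rewrite !big_seq; apply: eq_bigr => k hk.
rewrite UM ThetaU cats1 -/(tw (rcons k x)) tw_rcons (hw _ hk) mulrA //.
Qed.


Arguments Theta_app {n w} x.
Definition dw f s := der_word f (FMonom s).

Lemma fvE (t : seq bool) : fmonom_val (FMonom t) = t.
Proof. by []. Qed.

Lemma gen_rcons (R : ringType) (M : seq bool -> R) (F : bool -> R) s x :
  M [::] = 1 -> (forall t, M (rcons t x) = M t * M [:: x]) ->
  \sum_(i < size (rcons s x)) M (take i (rcons s x)) * F (nth false (rcons s x) i)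
        * M (drop i.+1 (rcons s x))
  = (\sum_(i < size s) M (take i s) * F (nth false s i) * M (drop i.+1 s)) * M [:: x]
    + M s * F x.
Proof.
move=> M0 Mr.
rewrite size_rcons big_ord_recr /= nth_rcons ltnn eqxx.
have -> : take (size s) (rcons s x) = s by rewrite -cats1 take_size_cat.
have -> : drop (size s).+1 (rcons s x) = [::].
  by rewrite -cats1 drop_oversize // size_cat addn1.
rewrite M0 mulr1 mulr_suml; congr (_ + _); apply: eq_bigr => i _.
rewrite /= drop_rcons // -cats1 takel_cat ?(ltnW (ltn_ord i)) // nth_cat ltn_ord.
by rewrite Mr mulrA.
Qed.

Lemma dw_rcons f s x :
  dw f (rcons s x) = dw f s * mon [:: x] + mon s * f x.
Proof.
rewrite /dw /der_word !fvE; apply: gen_rcons; first exact: mon_nil.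
by move=> t; rewrite mon_cat cats1.
Qed.

Definition Gf : bool -> ZAB := fun x => if x then va * vb else vb * va.
Definition Df : bool -> ZAB := fun _ => va * vb + vb * va.

Lemma dw_nil f : dw f [::] = 0.
Proof. by rewrite /dw /der_word big_ord0. Qed.

Lemma hom_dw f s : (forall y, homogeneous 2 (f y)) -> homogeneous (size s).+1 (dw f s).
Proof.
move=> hf; elim/last_ind: s => [|s x IH]; first by rewrite dw_nil; apply: hom0.
rewrite dw_rcons size_rcons; apply: homD.
  by refine (hom_eq (homM IH (hom_mon [:: x])) _); rewrite addn1.
by refine (hom_eq (homM (hom_mon s) (hf x)) _); rewrite addn2.
Qed.

Arguments hom_dw {f} s.

Lemma hom_ab y z : homogeneous 2 (mon [:: y] * mon [:: z]).
Proof. exact: (homM (hom_mon _) (hom_mon _)). Qed.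

Lemma hom_Gf y : homogeneous 2 (Gf y).
Proof. by case: y; apply: hom_ab. Qed.

Lemma hom_Df y : homogeneous 2 (Df y).
Proof. by apply: homD; apply: hom_ab. Qed.

Lemma qintS n : qint n.+1 = qint n + 'X^n.
Proof. by rewrite /qint big_ord_recr. Qed.

Lemma qintSl n : qint n.+1 = 1 + 'X * qint n.
Proof.
by rewrite /qint big_ord_recl expr0 big_distrr; congr (_ + _); apply: eq_bigr => i _; rewrite exprS.
Qed.

Lemma qint0 : qint 0 = 0.
Proof. by rewrite /qint big_ord0. Qed.

Lemma Theta_two s y z :
  Theta (mon s * (mon [:: y] * mon [:: z])) = tw s * fac (size s) y * fac (size s).+1 z.
Proof.
rewrite !mon_cat Theta_mon.
have -> : s ++ [:: y; z] = rcons (rcons s y) z by rewrite -!cats1 -catA.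
by rewrite !tw_rcons size_rcons.
Qed.

Lemma W1 s : Theta (dw Gf s) = 'X * qint (size s) * tw s.
Proof.
elim/last_ind: s => [|s x IH]; first by rewrite dw_nil Theta0 qint0 mulr0 mul0r.
rewrite dw_rcons ThetaD (Theta_app _ (hom_dw s hom_Gf)) IH tw_rcons size_rcons.
case: x; rewrite /Gf Theta_two /fac.
  rewrite qintSl !exprS; ring.
rewrite qintS !exprS; ring.
Qed.

Lemma Theta_vc s : Theta (vc * mon s) = tw (false :: s) + tw (true :: s).
Proof. by rewrite /vc mulrDl ThetaD /va /vb !mon_cat !Theta_mon. Qed.

Lemma hom_vc s : homogeneous (size s).+1 (vc * mon s).
Proof. by rewrite /vc mulrDl; apply: homD; apply: (homM (hom_mon [:: _]) (hom_mon s)). Qed.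


Lemma ThetaMD u v w : Theta (u * (v + w)) = Theta (u * v) + Theta (u * w).
Proof. by rewrite mulrDr (ThetaD (u * v)). Qed.

Lemma Theta_Df s x : Theta (mon s * Df x) = tw s * fac (size s) false * fac (size s).+1 true
   + tw s * fac (size s) true * fac (size s).+1 false.
Proof.
rewrite /Df ThetaMD /va /vb.
by rewrite [X in X + _ = _](Theta_two s false true) [X in _ + X = _](Theta_two s true false).
Qed.

Lemma poly_step (A B Q C f : {poly int}) : A + B = Q ->
  A * f + C + B * f = Q * f + C.
Proof. by move=> <-; rewrite mulrDl addrAC. Qed.

Lemma qint2 : qint 2 = 1 + 'X.
Proof. by rewrite /qint !big_ord_recr big_ord0 /= add0r expr0 expr1. Qed.

Lemma W2 s : Theta (dw Df s + vc * mon s) = qint 2 * qint (size s).+1 * tw s.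
Proof.
elim/last_ind: s => [|s x IH].
  rewrite dw_nil add0r mon_nil mulr1 /vc ThetaD /va /vb !Theta_mon.
  rewrite /tw /theta_word /qint /= !big_ord_recr !big_ord0 /=.
  rewrite !big_mkcond !big_ord_recr !big_ord0 /= !expr0 expr1 big_mkcond big_ord_recr big_ord0 /= expr1; ring.
rewrite ThetaD in IH.
have h1 := (Theta_app x (hom_dw s hom_Df)).
have h2 : Theta (vc * mon (rcons s x)) = Theta (vc * mon s) * fac (size s).+1 x.
  by rewrite -cats1 -mon_cat mulrA; exact: (Theta_app x (hom_vc s)).
rewrite (ThetaD (dw Df (rcons s x))) dw_rcons (ThetaD (dw Df s * mon [:: x])).
rewrite [X in X + _ + _ = _]h1 [X in _ + X + _ = _]Theta_Df [X in _ + X = _]h2.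
rewrite (poly_step _ _ _ _ _ IH) tw_rcons size_rcons /fac.
clear h1 h2; case: x.
  rewrite (qintSl (size s).+1) qint2 !exprS; ring.
rewrite (qintS (size s).+1) qint2 !exprS; ring.
Qed.

Lemma ThetaMU c t k : Theta (mon t * << c *g k >>) = c%:P * tw (t ++ k).
Proof. by rewrite MU ThetaU. Qed.

Lemma Theta_vcU c k : Theta (vc * << c *g k >>) = c%:P * Theta (vc * mon (fmonom_val k)).
Proof.
rewrite Theta_vc /vc mulrDl (ThetaD (va * << c *g k >>)) /va /vb.
by rewrite [X in X + _ = _]ThetaMU [X in _ + X = _]ThetaMU mulrDr.
Qed.

Lemma Theta_der f w : Theta (der f w) =
  \sum_(k <- msupp w) (w@_k)%:P * Theta (dw f (fmonom_val k)).
Proof.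
rewrite /der Theta_sum; apply: eq_bigr => k _; by rewrite ThetaZ /dw fmK.
Qed.

Theorem mainTheorem1 (n : nat) (w : ZAB) :
  homogeneous n w ->
  [/\ Theta (w * vc) = (1 + 'X^(n.+1)) * Theta w,
      Theta (Gder w) = 'X * qint n * Theta w,
      Theta (Pyr w) = qint (n.+2) * Theta w
    & Theta (Bipyr w) = qint 2 * qint (n.+1) * Theta w].
Proof.
move=> hw.
have P1 : Theta (w * vc) = (1 + 'X^(n.+1)) * Theta w.
  rewrite /vc mulrDr (ThetaD (w * va)) /va /vb.
  rewrite [X in X + _ = _](Theta_app false hw) [X in _ + X = _](Theta_app true hw) /fac; ring.
have P2 : Theta (Gder w) = 'X * qint n * Theta w.
  rewrite /Gder Theta_der [Theta w]ThetaE big_distrr !big_seq; apply: eq_bigr => k hk.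
  have := W1 (fmonom_val k); rewrite /Gf (hw _ hk) => ->.
  rewrite /tw fmK; by rewrite mulrCA.
split => //.
  rewrite /Pyr (ThetaD (Gder w)) P1 P2 qintSl qintS !exprS; ring.
rewrite /Bipyr (ThetaD (Dder w)) /Dder Theta_der [in vc * w](monalgE w).
rewrite mulr_sumr Theta_sum [Theta w]ThetaE big_distrr -big_split !big_seq.
apply: eq_bigr => k hk; rewrite Theta_vcU.
transitivity ((w@_k)%:P * (Theta (dw Df k) + Theta (vc * mon k))); first by rewrite mulrDr.
rewrite -(ThetaD (dw Df k)) W2 (hw _ hk) /tw fmK; by rewrite mulrCA.
Qed.
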